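(* Let $(X,\pi)$ be a finite symmetric two-player game with relative payoff game $(X,\Delta)$. Then $(X,\Delta)$ is a generalized rock-paper-scissors game if and only if there exists an imitation cycle.
   Context: A symmetric two-player game $(X,\pi)$ has common action set $X$ and payoff $\pi:X\times X\to\mathbb{R}$. Relative payoff: $\Delta(x,y)=\pi(x,y)-\pi(y,x)$, so $(X,\Delta)$ is a symmetric zero-sum game. A symmetric zero-sum game $(Y,\Delta)$ is a generalized rock-paper-scissors matrix if for every $y\in Y$ there is $x\in Y$ with $\Delta(x,y)>0$; $(X,\Delta)$ is a generalized rock-paper-scissors game if some nonempty $\bar X\subseteq X$ makes $(\bar X,\Delta|_{\bar X\times\bar X})$ a generalized rock-paper-scissors matrix. A cycle is a finite sequence of profiles $(x_0,y_0),\dots,(x_n,y_n)$ in $X\times X$, not all equal, with $(x_0,y_0)=(x_n,y_n)$; it is an imitation cycle if for all consecutive profiles $(x_t,y_t),(x_{t+1},y_{t+1})$ on it, $\Delta(x_t,y_t)>0$ and $y_{t+1}=x_t$. *)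

(* Defs.v *)
From mathcomp Require Import all_boot all_order all_algebra.
Set Implicit Arguments. Unset Strict Implicit. Unset Printing Implicit Defensive.
Import Order.TTheory GRing.Theory Num.Theory.
Local Open Scope ring_scope.

(* A symmetric two-player game (X, pi): common finite action set X,
   payoff pi : X -> X -> R, pi x y = payoff of playing x against y. *)

Definition rel_payoff (R : numDomainType) (X : Type) (pi : X -> X -> R)
  (x y : X) : R := pi x y - pi y x.

Definition gen_rps_matrix (R : numDomainType) (X : finType)
  (D : X -> X -> R) (Y : {set X}) : Prop :=
  forall y, y \in Y -> exists2 x, x \in Y & 0 < D x y.

Definition gen_rps_game (R : numDomainType) (X : finType)
  (D : X -> X -> R) : Prop :=
  exists Y : {set X}, Y != set0 /\ gen_rps_matrix D Y.

(* A cycle: finite sequence (x_0,y_0),...,(x_n,y_n) of profiles, given as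
   p0 :: s (so (x_0,y_0) = p0 and (x_n,y_n) = last p0 s), with
   last p0 s = p0 and not all profiles equal (this forces n >= 1). *)
Definition is_cycle (X : eqType) (p0 : X * X) (s : seq (X * X)) : Prop :=
  last p0 s = p0 /\ exists2 q, q \in s & q != p0.

Definition imitation_step (R : numDomainType) (X : eqType)
  (D : X -> X -> R) (p q : X * X) : bool :=
  (0 < D p.1 p.2) && (q.2 == p.1).

Definition imitation_cycle (R : numDomainType) (X : eqType)
  (D : X -> X -> R) (p0 : X * X) (s : seq (X * X)) : Prop :=
  is_cycle p0 s /\ path (imitation_step D) p0 s.

(* Main.v *)
Require Import Defs.
From mathcomp Require Import all_boot all_order all_algebra.
Import Order.TTheory GRing.Theory Num.Theory.
Local Open Scope ring_scope.

Lemma path_succ (T : eqType) (e : rel T) x s :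
  path e x s -> forall p, p \in belast x s -> exists2 q, q \in s & e p q.
Proof.
elim: s x => [|y s IH] x //= /andP[exy ps] p.
rewrite inE => /orP[/eqP-> | pb]; first by exists y; rewrite ?mem_head.
by have [q qs epq] := IH y ps p pb; exists q; rewrite // inE qs orbT.
Qed.

Arguments path_succ {T e x s}.

Lemma cycle_succ (T : eqType) (e : rel T) x s :
  path e x s -> last x s = x -> s != [::] ->
  forall p, p \in x :: s -> exists2 q, q \in s & e p q.
Proof.
move=> ps lx sn p; rewrite lastI mem_rcons inE => /orP[/eqP|pb].
  rewrite lx => ->; apply: (path_succ ps).
  by case: s ps lx sn => //= y s _ _ _; exact: mem_head.
exact: (path_succ ps).
Qed.

Arguments cycle_succ {T e x s}.

Theorem lemma3 (R : realDomainType) (X : finType) (pi : X -> X -> R) :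
  gen_rps_game (rel_payoff pi) <->
  exists (p0 : X * X) (s : seq (X * X)), imitation_cycle (rel_payoff pi) p0 s.
Proof.
set D := rel_payoff pi.
have Dzz z : D z z = 0 by rewrite /D /rel_payoff subrr.
split.
- move=> [Y [Yn HY]].
  have [y0 y0Y] := set0Pn _ Yn.
  pose f y := odflt y [pick x in Y | 0 < D x y].
  have fP y : y \in Y -> (f y \in Y) && (0 < D (f y) y).
    move=> yY; rewrite /f; case: pickP => [x /andP[-> ->] //|] /=.
    by have [x xY Dx] := HY y yY => /(_ x); rewrite xY Dx.
  pose g (p : X * X) := (f p.1, p.1).
  pose Z (p : X * X) := (p.2 \in Y) && (p.1 == f p.2).
  have Zg p : Z p -> Z (g p).
    by case/andP=> p2 /eqP p1; rewrite /Z /= eqxx andbT p1; case/andP: (fP _ p2).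
  have Zpos p : Z p -> 0 < D p.1 p.2.
    by case/andP=> p2 /eqP ->; case/andP: (fP _ p2).
  have pathZ k q : Z q -> path (imitation_step D) q (traject g (g q) k).
    elim: k q => [|k IH] q Zq //=.
    by rewrite /imitation_step Zpos //= eqxx IH // Zg.
  pose p0 := (f y0, y0).
  have Zp0 : Z p0 by rewrite /Z /= y0Y eqxx.
  have Ziter k : Z (iter k g p0) by elim: k => //= k IH; apply: Zg.
  have /trajectP[i ltin eqi] := looping_order g p0.
  set n := order g p0 in ltin eqi.
  pose q0 := iter i g p0; pose m := (n - i)%N.
  have mpos : (0 < m)%N by rewrite subn_gt0.
  have eqm : iter m g q0 = q0.
    by rewrite /q0 -iterD subnK ?eqi // ltnW.
  exists q0, (traject g (g q0) m); rewrite /imitation_cycle /is_cycle; split; last by apply: pathZ; apply: Ziter.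
  split; first by rewrite last_traject.
  exists (g q0); first by case: (m) mpos => // m' _; rewrite trajectS mem_head.
  apply/eqP => /(congr1 snd) /= e.
  by have := Zpos _ (Ziter i); rewrite -/q0 -e Dzz ltxx.
- move=> [p0 [s [[lp [q qs qn]] ps]]].
  have sn : s != [::] by case: s qs {ps lp}.
  have succ := cycle_succ ps lp sn.
  exists [set p.1 | p in [set p | p \in p0 :: s]]; split.
    by apply/set0Pn; exists p0.1; apply/imsetP; exists p0; rewrite ?inE ?eqxx.
  move=> y /imsetP[p]; rewrite inE => pin ->.
  have [r rs /andP[_ /eqP r2]] := succ p pin.
  have rin : r \in p0 :: s by rewrite inE rs orbT.
  exists r.1; first by apply/imsetP; exists r; rewrite ?inE.
  have [t _ /andP[Dr _]] := succ r rin.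
  by rewrite -r2.
Qed.
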